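(* Let $X$ be a normed space and $Y$ a Banach space, and let $l\in\{-1,1\}$. Suppose that an odd mapping $f:X\to Y$ satisfies $\|D_f(x,y)\|\le\phi(x,y)$ for all $x,y\in X$, where $\phi:X\times X\to[0,\infty)$ is a function such that $$\sum_{i=1}^{\infty}2^{il}\phi\left(\frac{x}{2^{il}},\frac{x}{2^{il}}\right)<\infty$$ for all $x\in X$ and $\lim_{n\to\infty}2^{ln}\phi\left(\frac{x}{2^{ln}},\frac{y}{2^{ln}}\right)=0$ for all $x,y\in X$. Then the limit $$A(x)=\lim_{n\to\infty}2^{ln}\left[f\left(\frac{x}{2^{l(n-l)}}\right)-8f\left(\frac{x}{2^{ln}}\right)\right]$$ exists for all $x\in X$, and $A:X\to Y$ is the unique additive function which satisfies $$3A(x+3y)-A(3x+y)=12[A(x+y)+A(x-y)]-16[A(x)+A(y)]+12A(2y)-4A(2x)\quad(x,y\in X)$$ and $$\|f(2x)-8f(x)-A(x)\|\le\frac12\sum_{i=\frac{|l-1|}{2}}^{\infty}2^{il}\phi\left(\frac{x}{2^{l(i+l)}},\frac{x}{2^{l(i+l)}}\right)$$ for all $x\in X$ (the summation starts at $i=0$ if $l=1$ and at $i=1$ if $l=-1$).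
   Context: For a mapping $f:X\to Y$ define $$D_f(x,y)=3f(x+3y)-f(3x+y)-12[f(x+y)+f(x-y)]+16[f(x)+f(y)]-12f(2y)+4f(2x)$$ for $x,y\in X$. A function $g:X\to Y$ is additive if $g(x+y)=g(x)+g(y)$ for all $x,y\in X$. *)

(* Defs.v *)
From HB Require Import structures.
From mathcomp Require Import all_boot all_order all_algebra.
From mathcomp Require Import all_classical all_reals all_analysis.
Set Implicit Arguments. Unset Strict Implicit. Unset Printing Implicit Defensive.
Import Order.TTheory GRing.Theory Num.Theory.
Import numFieldNormedType.Exports.
Local Open Scope ring_scope.

Definition Df (X Y : zmodType) (f : X -> Y) (x y : X) : Y :=
  f (x + y *+ 3) *+ 3 - f (x *+ 3 + y)
  - (f (x + y) + f (x - y)) *+ 12 + (f x + f y) *+ 16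
  - f (y *+ 2) *+ 12 + f (x *+ 2) *+ 4.

Definition additive_map (X Y : zmodType) (g : X -> Y) : Prop :=
  forall x y, g (x + y) = g x + g y.

Definition odd_map (X Y : zmodType) (f : X -> Y) : Prop :=
  forall x, f (- x) = - f x.

(* Main.v *)
Require Import Defs.
From HB Require Import structures.
From mathcomp Require Import all_boot all_order all_algebra.
From mathcomp Require Import all_classical all_reals all_analysis.
From mathcomp Require Import ring lra.
Import Order.TTheory GRing.Theory Num.Theory.
Import numFieldNormedType.Exports.
Local Open Scope classical_set_scope.
Local Open Scope ring_scope.

Section Emb.
Variable V : zmodType.
Definition emb (vs : seq V) (p : {poly int}) : V := \sum_(i < size vs) vs`_i *~ p`_i.
Lemma embD vs p q : emb vs (p + q) = emb vs p + emb vs q.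
Proof. by rewrite /emb -big_split; apply eq_bigr => i _; rewrite coefD mulrzDr. Qed.
Lemma embN vs p : emb vs (- p) = - emb vs p.
Proof. by rewrite /emb -sumrN; apply eq_bigr => i _; rewrite coefN mulrNz. Qed.
Lemma emb0 vs : emb vs 0 = 0.
Proof. by rewrite /emb big1 // => i _; rewrite coef0 mulr0z. Qed.
Lemma embB vs p q : emb vs (p - q) = emb vs p - emb vs q.
Proof. by rewrite embD embN. Qed.
Lemma embMn vs p n : emb vs (p *+ n) = emb vs p *+ n.
Proof. elim: n => [|n IH]; first by rewrite !mulr0n emb0. by rewrite !mulrS embD IH. Qed.
Lemma embX vs i : (i < size vs)%N -> emb vs 'X^i = vs`_i.
Proof.
move=> H; rewrite /emb (bigD1 (Ordinal H)) //= coefXn eqxx mulr1z big1 ?addr0 //.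
by move=> j /negbTE; rewrite coefXn -(inj_eq val_inj) /= => ->; rewrite mulr0z.
Qed.
End Emb.
Arguments emb {V}.

Ltac inlist x l :=
  match l with
  | nil => false
  | cons ?y _ => let __ := match goal with _ => unify x y end in true
  | cons _ ?r => inlist x r
  end.

Ltac collect t acc :=
  lazymatch t with
  | ?a + ?b => let acc1 := collect a acc in collect b acc1
  | - ?a => collect a acc
  | ?a *+ ?n => collect a acc
  | 0 => acc
  | _ => let b := inlist t acc in
         lazymatch b with true => acc | false => constr:(cons t acc) end
  end.

Ltac findi x l :=
  match l with
  | cons ?y _ => let __ := match goal with _ => unify x y end in constr:(0%N)
  | cons _ ?r => let k := findi x r in constr:(S k)
  end.

Ltac reif l t :=
  lazymatch t with
  | ?a + ?b => let a' := reif l a in let b' := reif l b in constr:(a' + b')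
  | - ?a => let a' := reif l a in constr:(- a')
  | ?a *+ ?n => let a' := reif l a in constr:(a' *+ n)
  | 0 => constr:(0 : {poly int})
  | _ => let k := findi t l in constr:(('X^k : {poly int}))
  end.

Ltac zmod :=
  lazymatch goal with
  | |- @eq ?T ?lhs ?rhs =>
    let l0 := collect lhs (@nil T) in
    let l := collect rhs l0 in
    let pl := reif l lhs in
    let pr := reif l rhs in
    let E := fresh "E" in
    have E : pl = pr by [ring];
    have := congr1 (emb l) E;
    rewrite ?(embD, embN, embB, embMn, emb0) ?embX //=; exact
  end.

Section Alg.
Variables (R : numFieldType) (X Y : lmodType R).

Lemma mulrn_cancel (z w : Y) n : z *+ n.+1 = w *+ n.+1 -> z = w.
Proof.
move=> H; apply: (@scalerI _ _ (n.+1%:R : R)); first by rewrite pnatr_eq0.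
by rewrite !scaler_nat.
Qed.

Definition Dz (A : X -> Y) (x y : X) : Y :=
  A (x + y *+ 3) *+ 3 - A (x *+ 3 + y)
  - (A (x + y) + A (x - y)) *+ 12 + (A x + A y) *+ 16
  - A (y *+ 2) *+ 12 + A (x *+ 2) *+ 4.

Variable A : X -> Y.
Hypothesis Aodd : forall x, A (- x) = - A x.
Hypothesis A2 : forall x, A (x *+ 2) = A x *+ 2.
Hypothesis AD : forall x y, Dz A x y = 0.

Lemma comb (V : zmodType) (l r s : V) : s = 0 -> l - r = s -> l = r.
Proof. by move=> -> /eqP; rewrite subr_eq0 => /eqP. Qed.

Lemma A0 : A 0 = 0.
Proof.
have := A2 0; rewrite mul0rn mulr2n => /(congr1 (fun z => z - A 0)).
by rewrite addrK subrr.
Qed.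

Lemma Eq3 x y : A (x + y *+ 3) *+ 8 = A (x + y) *+ 48 + A (x - y) *+ 24 - A x *+ 64.
Proof.
apply: (@comb _ _ _ (Dz A x y *+ 3 + Dz A y x)); first by rewrite !AD mul0rn addr0.
rewrite /Dz !A2 (addrC y (x *+ 3)) (addrC (y *+ 3) x) (addrC y x) -(opprB x y) Aodd.
zmod.
Qed.

Lemma RR u v : A (u *+ 2 + v) = A u *+ 6 - A v *+ 3 - A (u - v) *+ 4.
Proof.
have H := Eq3 (u - v) (u + v).
have e1 : (u - v) + (u + v) *+ 3 = (u *+ 2 + v) *+ 2 by zmod.
have e2 : (u - v) + (u + v) = u *+ 2 by zmod.
have e3 : (u - v) - (u + v) = - (v *+ 2) by zmod.
rewrite e1 e2 e3 Aodd !A2 in H.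
apply: (@mulrn_cancel _ _ 15).
apply: (@comb _ _ _ (A ((u *+ 2 + v)) *+ 2 *+ 8 - (A u *+ 2 *+ 48 + - (A v *+ 2) *+ 24 - A (u - v) *+ 64))).
  by rewrite H subrr.
zmod.
Qed.

Lemma additive_of_D : forall x y, A (x + y) = A x + A y.
Proof.
move=> d a.
have H1 := RR d (a *+ 2).
have H2 := RR (- a) d.
have e1 : d *+ 2 + a *+ 2 = (d + a) *+ 2 by zmod.
have e2 : d - a *+ 2 = (- a) *+ 2 + d by zmod.
have e3 : - a - d = - (d + a) by zmod.
rewrite e1 e2 !A2 in H1; rewrite e3 !Aodd in H2.
apply: (@mulrn_cancel _ _ 17).
apply: (@comb _ _ _ ((A (d + a) *+ 2 - (A d *+ 6 - A a *+ 2 *+ 3 - A ((- a) *+ 2 + d) *+ 4)) 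
   - (A ((- a) *+ 2 + d) - (- A a *+ 6 - A d *+ 3 - - A (d + a) *+ 4)) *+ 4)).
  by rewrite H1 H2 !subrr mul0rn subr0.
zmod.
Qed.
End Alg.
Arguments Dz {R X Y}.

Lemma core_tel {R : realType} {Y : normedModType R} (u : nat -> Y) (b : nat -> R) :
  (forall n, `|u n.+1 - u n| <= b n) -> forall n, `|u 0%N - u n| <= \sum_(k < n) b k.
Proof.
move=> Hb; elim=> [|n IH]; first by rewrite subrr normr0 big_ord0.
rewrite big_ord_recr /= (_ : u 0%N - u n.+1 = (u 0%N - u n) - (u n.+1 - u n)); last first.
  by rewrite opprB addrA subrK.
by apply: (le_trans (ler_normB _ _)); apply: lerD.
Qed.

Lemma core_cvg {R : realType} {Y : completeNormedModType R} (u : nat -> Y) (b : nat -> R) M :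
  (forall n, `|u n.+1 - u n| <= b n) -> (forall n, \sum_(k < n) b k <= M) -> cvgn u.
Proof.
move=> Hb HM.
have -> : u = (fun n => u 0%N + series (telescope u) n).
  by apply/funext => n; rewrite -eq_sum_telescope.
apply: cvgP; apply: cvgD; first exact: cvg_cst.
apply: normed_cvg.
apply: nondecreasing_is_cvgn.
  rewrite /normed_series_of.
  exact: (@nondecreasing_series _ _ xpredT 0%N (fun n _ _ => normr_ge0 _)).
exists M => _ [n _ <-].
rewrite /normed_series_of /series /= big_mkord.
apply: le_trans (HM n); apply: ler_sum => k _; exact: Hb.
Qed.

Section ES.
Variable R : realType.
Local Open Scope ereal_scope.

Lemma ebound (h : nat -> R) m : (forall n, (0 <= h n)%R) ->
  \sum_(m <= i <oo) (h i)%:E < +oo ->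
  forall N, (\sum_(m <= i < N) h i <= fine (\sum_(m <= i <oo) (h i)%:E))%R.
Proof.
move=> h0 hfin N.
have ge0 : 0 <= \sum_(m <= i <oo) (h i)%:E by apply: nneseries_ge0 => n _ _; rewrite lee_fin.
rewrite -lee_fin fineK; last by rewrite ge0_fin_numE.
rewrite -sumEFin; apply: nneseries_lim_ge => n _ _; by rewrite lee_fin.
Qed.

Lemma eseries_le (c : nat -> R) m M : (forall n, (0 <= c n)%R) ->
  (forall N, (\sum_(m <= i < N) c i <= M)%R) -> \sum_(m <= i <oo) (c i)%:E <= M%:E.
Proof.
move=> c0 HM; apply: lime_le.
  by apply: is_cvg_nneseries => n _ _; rewrite lee_fin.
by apply: nearW => N; rewrite /= sumEFin lee_fin.
Qed.

Lemma eseries_shift (F : nat -> R) k0 n : (forall j, (0 <= F j)%R) ->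
  \sum_(k0 <= i <oo) (F (i + n)%N)%:E = \sum_(k0 + n <= j <oo) (F j)%:E.
Proof.
move=> F0.
rewrite -(@nneseries_addn _ (fun i => (F (i + n)%N)%:E) k0); last by move=> i; rewrite lee_fin.
rewrite -(@nneseries_addn _ (fun i => (F i)%:E) (k0 + n)); last by move=> i; rewrite lee_fin.
by apply: eq_eseriesr => i _; rewrite addnA.
Qed.

Lemma tail_fine (c : nat -> R) m : (forall n, (0 <= c n)%R) ->
  \sum_(0 <= i <oo) (c i)%:E < +oo ->
  (fun n => fine (\sum_(m + n <= j <oo) (c j)%:E)) @ \oo --> 0%R.
Proof.
move=> c0 cfin.
have := @nneseries_tail_cvg R (fun i => (c i)%:E) xpredT cfin (fun k _ => c0 k).
rewrite -(cvg_shiftn m) /= => H.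
have H' : (fun n => \sum_(m + n <= j <oo) (c j)%:E) @ \oo --> 0%:E.
  by apply: cvg_trans H; apply: near_eq_cvg; apply: nearW => n /=; rewrite addnC.
by case/fine_cvgP: H'.
Qed.

Lemma final_bound (Y : normedModType R) (v : nat -> Y) (L w : Y) (c : nat -> R) m :
  (forall n, (0 <= c n)%R) -> v @ \oo --> L ->
  (forall n, (`|w - v n| <= 2^-1 * \sum_(m <= i < n + m) c i)%R) ->
  `|w - L|%:E <= (2^-1)%:E * \sum_(m <= i <oo) (c i)%:E.
Proof.
move=> c0 Hv Hb.
have E0 : 0 <= \sum_(m <= i <oo) (c i)%:E by apply: nneseries_ge0 => n _ _; rewrite lee_fin.
have [Eoo|Efin] := eqVneq (\sum_(m <= i <oo) (c i)%:E) +oo.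
  by rewrite Eoo gt0_muley ?leey // lte_fin invr_gt0.
have Ef : \sum_(m <= i <oo) (c i)%:E \is a fin_num.
  by rewrite ge0_fin_numE // lt_neqAle Efin leey.
rewrite -(fineK Ef) -EFinM lee_fin.
set e := fine _.
have Hp : forall N, (\sum_(m <= i < N) c i <= e)%R.
  move=> N; rewrite -lee_fin /e fineK // -sumEFin.
  by apply: nneseries_lim_ge => n _ _; rewrite lee_fin.
have Hc : (fun n => `|w - v n|%R) @ \oo --> `|w - L|%R.
  apply: cvg_norm; apply: cvgB => //; exact: cvg_cst.
rewrite -(cvg_lim _ Hc) //.
apply: limr_le; first by apply/cvg_ex; exists `|w - L|%R.
apply: nearW => n /=; apply: (le_trans (Hb n)).
by rewrite ler_pM2l ?invr_gt0 //.
Qed.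

Lemma sum_le_full (c : nat -> R) m N : (forall n, (0 <= c n)%R) ->
  (\sum_(m <= i < N) c i <= \sum_(0 <= i < N) c i)%R.
Proof.
move=> c0; case: (leqP m N) => mN.
  rewrite [X in (_ <= X)%R](@big_cat_nat _ _ _ m 0 N _ _ (leq0n m) mN) /= lerDr.
  by apply: sumr_ge0 => i _.
by rewrite big_geq ?(ltnW mN) //; apply: sumr_ge0 => i _.
Qed.

Lemma tail_fin (c : nat -> R) m : (forall n, (0 <= c n)%R) ->
  \sum_(0 <= i <oo) (c i)%:E < +oo -> \sum_(m <= i <oo) (c i)%:E \is a fin_num.
Proof.
move=> c0 cf; rewrite ge0_fin_numE; last by apply: nneseries_ge0 => n _ _; rewrite lee_fin.
apply: (le_lt_trans (@eseries_le c m (fine (\sum_(0 <= i <oo) (c i)%:E)) c0 _)).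
  by move=> N; apply: le_trans (@sum_le_full c m N c0) _; exact: ebound.
by rewrite ltry.
Qed.
End ES.
Arguments ebound {R}.
Arguments eseries_le {R}.
Arguments eseries_shift {R}.
Arguments tail_fine {R}.
Arguments final_bound {R Y}.
Arguments sum_le_full {R}.
Arguments tail_fin {R}.

Section Main.
Variables (R : realType) (X : normedModType R) (Y : completeNormedModType R).
Variables (l : int) (f : X -> Y) (phi : X -> X -> R).
Hypothesis Hl : l = 1 \/ l = -1.
Hypothesis fodd : forall x, f (- x) = - f x.
Hypothesis phi0 : forall x y, 0 <= phi x y.
Hypothesis HD : forall x y, `|Dz f x y| <= phi x y.
Hypothesis Hlim : forall x y : X,
     (fun n : nat => (2:R) ^ (l * n%:Z) *
        phi (((2:R) ^ (l * n%:Z))^-1 *: x) (((2:R) ^ (l * n%:Z))^-1 *: y))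
       @ \oo --> (0:R).

Definition g (x : X) : Y := f (2 *: x) - f x *+ 8.
Definition s (n : nat) : R := (2:R) ^ (l * n%:Z).
Definition a (x : X) (n : nat) : Y := s n *: g ((s n)^-1 *: x).

Lemma two_unit : (2:R) \is a GRing.unit.
Proof. by rewrite unitfE pnatr_eq0. Qed.

Lemma ll : l * l = 1.
Proof. by case: Hl => ->. Qed.

Lemma s_gt0 n : 0 < s n.
Proof. by apply: exprz_gt0. Qed.

Lemma s0 : s 0 = 1.
Proof. by rewrite /s mulr0 expr0z. Qed.

Lemma f0 : f 0 = 0.
Proof.
have := fodd 0; rewrite oppr0 => /(congr1 (fun z => z + f 0)).
by rewrite addNr => /eqP; rewrite -mulr2n -scaler_nat scaler_eq0 pnatr_eq0 /= eq_sym => /eqP.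
Qed.

Lemma sc2 (v : X) : 2 *: v = v *+ 2.
Proof. by rewrite scaler_nat. Qed.

Lemma seqE x n : s n *: (f (((2:R) ^ (l * (n%:Z - l)))^-1 *: x)
           - f (((2:R) ^ (l * n%:Z))^-1 *: x) *+ 8) = a x n.
Proof.
rewrite /a /g -/(s n) scalerA.
have -> : (2:R) ^ (l * (n%:Z - l)) = s n * 2^-1.
  by rewrite /s -exprN1 -exprzDr ?two_unit // mulrBr ll.
by rewrite invfM invrK mulrC.
Qed.

Lemma g_step x : `|g (2 *: x) - g x *+ 2| <= phi x x / 2.
Proof.
have H := HD x x.
have E : Dz f x x = (g (2 *: x) - g x *+ 2) *+ 2.
  rewrite /Dz /g !sc2.
  rewrite (_ : x + x *+ 3 = x *+ 2 *+ 2); last by zmod.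
  rewrite (_ : x *+ 3 + x = x *+ 2 *+ 2); last by zmod.
  rewrite (_ : x + x = x *+ 2); last by zmod.
  rewrite subrr f0. zmod.
rewrite E normrMn in H.
by rewrite ler_pdivlMr // mulr_natr.
Qed.

Lemma g_odd x : g (- x) = - g x.
Proof. rewrite /g scalerN !fodd; zmod. Qed.

Lemma a_odd x n : a (- x) n = - a x n.
Proof. by rewrite /a scalerN g_odd scalerN. Qed.

Lemma Dz_cvg (h : nat -> X -> Y) (H : X -> Y) x y :
  (forall z, (fun n => h n z) @ \oo --> H z) ->
  (fun n => Dz (h n) x y) @ \oo --> Dz H x y.
Proof.
move=> Hc; rewrite /Dz.
apply: cvgD; [apply: cvgB|]; [apply: cvgD|..]; [apply: cvgB|..]; [apply: cvgB|..].
all: try apply: cvgMn; try apply: cvgD; try apply: Hc.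
all: try apply: cvgMn; try apply: cvgD; try apply: Hc.
Qed.

Lemma Dz_scale (r : R) (h : X -> Y) u v : Dz (fun z => r *: h z) u v = r *: Dz h u v.
Proof. by rewrite /Dz !(scalerDr, scalerBr, scalerMnr, scalerN). Qed.

Lemma Dz_pre (r : R) (h : X -> Y) x y : Dz (fun z => h (r *: z)) x y = Dz h (r *: x) (r *: y).
Proof. by rewrite /Dz !(scalerDr, scalerBr, scalerMnr, scalerN). Qed.

Lemma Dz_sub8 (h1 h2 : X -> Y) x y :
  Dz (fun z => h1 z - h2 z *+ 8) x y = Dz h1 x y - Dz h2 x y *+ 8.
Proof. rewrite /Dz; zmod. Qed.

Lemma Dz_a x y n : Dz (a^~ n) x y = s n *: Dz g ((s n)^-1 *: x) ((s n)^-1 *: y).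
Proof.
change (a^~ n) with (fun z => s n *: (fun w => g ((s n)^-1 *: w)) z).
by rewrite Dz_scale Dz_pre.
Qed.

Lemma Dz_g u v : Dz g u v = Dz f (2 *: u) (2 *: v) - Dz f u v *+ 8.
Proof.
change g with (fun z => (fun w => f (2 *: w)) z - f z *+ 8).
by rewrite Dz_sub8 Dz_pre.
Qed.

Lemma sx2 (r : R) (v : X) : 2 *: (r *: v) = r *: (2 *: v).
Proof. by rewrite !scalerA mulrC. Qed.

Lemma Dz_a_bound x y n : `|Dz (a^~ n) x y| <=
  s n * phi ((s n)^-1 *: (2 *: x)) ((s n)^-1 *: (2 *: y))
  + (s n * phi ((s n)^-1 *: x) ((s n)^-1 *: y)) *+ 8.
Proof.
rewrite Dz_a normrZ Dz_g gtr0_norm ?s_gt0 // -mulrnAr -mulrDr.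
rewrite ler_pM2l ?s_gt0 //.
apply: (le_trans (ler_normB _ _)); rewrite normrMn -!sx2.
by apply: lerD; [apply: HD | rewrite lerMn2r /=; apply: HD].
Qed.

Lemma Dz_a_cvg0 x y : (fun n => Dz (a^~ n) x y) @ \oo --> 0.
Proof.
suff H : (fun n => `|Dz (a^~ n) x y|) @ \oo --> (0:R) by apply: norm_cvg0; exact: H.
apply: (@squeeze_cvgr _ _ _ _ (cst 0) (fun n => s n * phi ((s n)^-1 *: (2 *: x)) ((s n)^-1 *: (2 *: y))
  + (s n * phi ((s n)^-1 *: x) ((s n)^-1 *: y)) *+ 8)).
- by apply: nearW => n; rewrite /= normr_ge0 Dz_a_bound.
- exact: cvg_cst.
- rewrite -[0](addr0 0) -{2}(mul0rn R 8).
  apply: cvgD; [exact: Hlim | apply: cvgMn; exact: Hlim].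
Qed.


Lemma additive_pow (B : X -> Y) : (forall x y, B (x + y) = B x + B y) ->
  forall (k : int) z, B ((2:R) ^ k *: z) = (2:R) ^ k *: B z.
Proof.
move=> Badd.
have Bnat : forall (n : nat) z, B ((2:R) ^+ n *: z) = (2:R) ^+ n *: B z.
  elim=> [|n IH] z; first by rewrite !expr0 !scale1r.
  by rewrite exprS -!scalerA sc2 mulr2n Badd IH scaler_nat mulr2n.
case=> n z; first by rewrite -exprnP Bnat.
rewrite NegzE -invr_expz -exprnP.
set w := ((2:R) ^+ n.+1)^-1 *: z.
have -> : z = (2:R) ^+ n.+1 *: w by rewrite /w scalerA divff ?scale1r // expf_neq0 // pnatr_eq0.
rewrite Bnat scalerA mulVf ?scale1r // expf_neq0 // pnatr_eq0.
Qed.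

Definition c (x : X) (i : nat) : R :=
  (2:R) ^ (i%:Z * l) * phi (((2:R) ^ (l * (i%:Z + l)))^-1 *: x) (((2:R) ^ (l * (i%:Z + l)))^-1 *: x).

Lemma c_ge0 x i : 0 <= c x i.
Proof. by rewrite /c mulr_ge0 // exprz_ge0. Qed.

Lemma c_shift x n i : s n * c ((s n)^-1 *: x) i = c x (i + n)%N.
Proof.
rewrite /c /s mulrA -exprzDr ?two_unit // scalerA -invfM -exprzDr ?two_unit //.
have -> : l * n%:Z + i%:Z * l = (i + n)%N%:Z * l by rewrite PoszD; ring.
by have -> : l * (i%:Z + l) + l * n%:Z = l * ((i + n)%N%:Z + l) by rewrite PoszD; ring.
Qed.

Lemma unique_lim k0 (Hcfin : forall x, (\sum_(0 <= i <oo) (c x i)%:E < +oo)%E) (B : X -> Y) :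
  (forall x y, B (x + y) = B x + B y) ->
  (forall x, (`|g x - B x|%:E <= (2^-1)%:E * \sum_(k0 <= i <oo) (c x i)%:E)%E) ->
  forall x, a x @ \oo --> B x.
Proof.
move=> Badd Bb x.
have key : forall n, `|a x n - B x| <= 2^-1 * fine (\sum_(k0 + n <= j <oo) (c x j)%:E).
  move=> n; set z := (s n)^-1 *: x.
  have Bx : B x = s n *: B z.
    rewrite /s -additive_pow // -/(s n) /z scalerA divff ?scale1r //.
    by rewrite gt_eqF ?s_gt0.
  rewrite /a -/z Bx -scalerBr normrZ gtr0_norm ?s_gt0 //.
  have E : ((s n)%:E * \sum_(k0 <= i <oo) (c z i)%:E = \sum_(k0 + n <= j <oo) (c x j)%:E)%E.
    rewrite -nneseriesZl; last by move=> i _; rewrite lee_fin c_ge0.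
    rewrite -(eseries_shift (c x) k0 n (c_ge0 x)).
    by apply: eq_eseriesr => i _; rewrite -EFinM c_shift.
  rewrite -lee_fin EFinM (EFinM (2^-1)) fineK; last exact: tail_fin (c_ge0 x) (Hcfin x).
  rewrite -E muleCA.
  apply: lee_wpmul2l; first by rewrite lee_fin ltW ?s_gt0.
  exact: Bb.
have H0 : (fun n => a x n - B x) @ \oo --> 0.
  suff H : (fun n => `|a x n - B x|) @ \oo --> (0:R) by apply: norm_cvg0; exact: H.
  apply: (@squeeze_cvgr _ _ _ _ (cst 0) (fun n => 2^-1 * fine (\sum_(k0 + n <= j <oo) (c x j)%:E))).
  - by apply: nearW => n; rewrite /= normr_ge0 key.
  - exact: cvg_cst.
  - rewrite -(mulr0 (2^-1 : R)); apply: cvgMr.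
    exact: tail_fine (c_ge0 x) (Hcfin x).
have -> : a x = (fun n => (a x n - B x) + B x) by apply/funext => n; rewrite subrK.
suff : (fun n => (a x n - B x) + B x) @ \oo --> 0 + B x by rewrite add0r.
apply: cvgD => //; exact: cvg_cst.
Qed.
Definition A (x : X) : Y := lim (a x @ \oo).

Section Add.
Hypothesis Hcvg : forall x, cvgn (a x).
Hypothesis HA2 : forall x, A (x *+ 2) = A x *+ 2.

Lemma A_additive x y : A (x + y) = A x + A y.
Proof.
apply: (@additive_of_D R X Y A).
- move=> z; rewrite /A; apply/cvg_lim => //.
  rewrite (_ : a (- z) = (fun n => - a z n)); last by apply/funext=> n; rewrite a_odd.
  exact: cvgN.
- exact: HA2.
- move=> u v; apply: (cvg_unique _ _ (Dz_a_cvg0 u v)) => //.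
  by apply: Dz_cvg => z; apply: Hcvg.
Qed.
End Add.

Lemma a0 x : a x 0 = g x.
Proof. by rewrite /a s0 invr1 !scale1r. Qed.

Lemma sum_shift (F : nat -> R) k0 n : \sum_(k < n) F (k + k0)%N = \sum_(k0 <= i < n + k0) F i.
Proof. by rewrite [RHS](@big_addn _ _ _ 0 (n + k0) k0) addnK big_mkord. Qed.

Lemma package k0
  (Hi : forall x n, `|a x n.+1 - a x n| <= 2^-1 * c x (n + k0))
  (Hii : forall x, exists M, forall N, \sum_(0 <= i < N) c x i <= M)
  (HA2 : (forall x, cvgn (a x)) -> forall x, A (x *+ 2) = A x *+ 2) :
  exists A0 : X -> Y, (forall x, a x @ \oo --> A0 x) /\
    (forall x y, A0 (x + y) = A0 x + A0 y) /\
    (forall x, (`|g x - A0 x|%:E <= (2^-1)%:E * \sum_(k0 <= i <oo) (c x i)%:E)%E) /\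
    (forall B : X -> Y, (forall x y, B (x + y) = B x + B y) ->
       (forall x, (`|g x - B x|%:E <= (2^-1)%:E * \sum_(k0 <= i <oo) (c x i)%:E)%E) ->
       B = A0).
Proof.
have Hcvg : forall x, cvgn (a x).
  move=> x; have [M HM] := Hii x.
  apply: (@core_cvg _ _ (a x) (fun n => 2^-1 * c x (n + k0)%N) (2^-1 * M)); first exact: Hi.
  move=> n; rewrite -mulr_sumr ler_pM2l ?invr_gt0 // sum_shift.
  apply: le_trans (HM (n + k0)%N); exact: sum_le_full (c_ge0 x).
have Hcfin : forall x, (\sum_(0 <= i <oo) (c x i)%:E < +oo)%E.
  move=> x; have [M HM] := Hii x.
  by apply: (le_lt_trans (eseries_le (c x) 0%N M (c_ge0 x) HM)); rewrite ltry.
have HAc : forall x, a x @ \oo --> A x by move=> x; exact: Hcvg.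
exists A; split; first exact: HAc.
split; first exact: A_additive Hcvg (HA2 Hcvg).
split.
  move=> x; apply: (final_bound (a x)) => //; first exact: c_ge0.
  move=> n; rewrite -a0 -sum_shift mulr_sumr.
  exact: core_tel (fun k => Hi x k) n.
move=> B Badd Bb; apply/funext => x.
have := @unique_lim k0 Hcfin B Badd Bb x.
by move/cvg_lim => <- //.
Qed.

Definition h (x : X) (i : nat) : R :=
  (2:R) ^ (i%:Z * l) * phi (((2:R) ^ (i%:Z * l))^-1 *: x) (((2:R) ^ (i%:Z * l))^-1 *: x).
Hypothesis Hsum : forall x, (\sum_(1 <= i <oo) (h x i)%:E < +oo)%E.

Lemma h_ge0 x i : 0 <= h x i.
Proof. by rewrite /h mulr_ge0 // exprz_ge0. Qed.

Lemma hbound x : exists M, forall N, \sum_(1 <= i < N) h x i <= M.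
Proof. exists (fine (\sum_(1 <= i <oo) (h x i)%:E)); exact: ebound (h_ge0 x) (Hsum x). Qed.

Section Case1.
Hypothesis e : l = 1.

Lemma s1 n : s n = 2 ^+ n.
Proof. by rewrite /s e mul1r -exprnP. Qed.

Lemma c1 x n : c x n = 2 ^+ n * phi ((2 ^+ n.+1)^-1 *: x) ((2 ^+ n.+1)^-1 *: x).
Proof.
have E : n%:Z + 1 = (n.+1)%:Z by rewrite -addn1 PoszD.
by rewrite /c e mulr1 mul1r -exprnP E -exprnP.
Qed.

Lemma h1 x n : h x n = 2 ^+ n * phi ((2 ^+ n)^-1 *: x) ((2 ^+ n)^-1 *: x).
Proof. by rewrite /h e mulr1 -exprnP. Qed.

Lemma inv2S n : (2 ^+ n)^-1 = 2 * (2 ^+ n.+1)^-1 :> R.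
Proof. by rewrite exprS invfM mulrA divff ?mul1r // pnatr_eq0. Qed.

Lemma case1_i x n : `|a x n.+1 - a x n| <= 2^-1 * c x (n + 0).
Proof.
rewrite addn0 c1 /a !s1; set u := (2 ^+ n.+1)^-1 *: x.
have p : (2 ^+ n)^-1 *: x = 2 *: u by rewrite /u scalerA -inv2S.
rewrite p exprSr -scalerA scaler_nat -scalerBr normrZ.
rewrite ger0_norm ?exprn_ge0 // distrC mulrCA ler_pM2l ?exprn_gt0 //.
by rewrite mulrC; apply: g_step.
Qed.

Lemma case1_ii x : exists M, forall N, \sum_(0 <= i < N) c x i <= M.
Proof.
have [M HM] := hbound x; exists (2^-1 * M) => N.
rewrite big_mkord.
have -> : \sum_(i < N) c x i = 2^-1 * \sum_(i < N) h x (i + 1)%N.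
  rewrite mulr_sumr; apply: eq_bigr => i _; rewrite c1 h1 addn1 mulrA.
  by congr (_ * _); rewrite exprS mulrA mulVf ?mul1r // pnatr_eq0.
rewrite ler_pM2l ?invr_gt0 // sum_shift; exact: HM.
Qed.

Lemma case1_iii : (forall x, cvgn (a x)) -> forall x, A (x *+ 2) = A x *+ 2.
Proof.
move=> Hc x; apply: cvg_lim => //.
rewrite -cvg_shiftS.
have -> : [sequence a (x *+ 2) n.+1]_n = (fun n => a x n *+ 2).
  apply/funext => n /=; rewrite /a !s1 -sc2 scalerA.
  rewrite (_ : (2 ^+ n.+1)^-1 * 2 = (2 ^+ n)^-1); last by rewrite mulrC -inv2S.
  by rewrite exprSr -scalerA scaler_nat scalerMnr.
apply: cvgMn; exact: Hc.
Qed.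
End Case1.

Section Case2.
Hypothesis e : l = -1.

Lemma s2 n : s n = (2 ^+ n)^-1.
Proof. by rewrite /s e mulN1r -exprnN. Qed.

Lemma c2 x j : c x j.+1 = (2 ^+ j.+1)^-1 * phi (2 ^+ j *: x) (2 ^+ j *: x).
Proof.
have E : -1 * ((j.+1)%:Z + -1) = - j%:Z by rewrite -addn1 PoszD; ring.
by rewrite /c e mulrN1 -exprnN E -exprnN invrK.
Qed.

Lemma h2 x j : h x j = (2 ^+ j)^-1 * phi (2 ^+ j *: x) (2 ^+ j *: x).
Proof. by rewrite /h e mulrN1 -exprnN invrK. Qed.

Lemma inv2S' n : (2 ^+ n)^-1 = (2 ^+ n.+1)^-1 * 2 :> R.
Proof. by rewrite exprSr invfM -mulrA mulVf ?mulr1 // pnatr_eq0. Qed.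

Lemma case2_i x n : `|a x n.+1 - a x n| <= 2^-1 * c x (n + 1).
Proof.
rewrite addn1 c2 /a !s2 !invrK; set v := 2 ^+ n *: x.
have p : 2 ^+ n.+1 *: x = 2 *: v by rewrite /v scalerA -exprS.
rewrite p (inv2S' n) -scalerA (scaler_nat 2 (g v)) -scalerBr normrZ.
rewrite ger0_norm ?invr_ge0 ?exprn_ge0 // mulrCA ler_pM2l ?invr_gt0 ?exprn_gt0 //.
by rewrite mulrC; apply: g_step.
Qed.

Lemma case2_ii x : exists M, forall N, \sum_(0 <= i < N) c x i <= M.
Proof.
have [M HM] := hbound x; exists (c x 0 + 2^-1 * (h x 0 + M)).
have M0 : 0 <= M by have := HM 0%N; rewrite big_geq.
have key : forall N, \sum_(i < N) h x i <= h x 0 + M.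
  case=> [|N]; first by rewrite big_ord0 addr_ge0 ?h_ge0.
  rewrite big_ord_recl lerD2l.
  rewrite (eq_bigr (fun i : 'I_N => h x (i + 1)%N)); last by move=> i _; rewrite lift0 addn1.
  by rewrite sum_shift; apply: HM.
move=> N; apply: (@le_trans _ _ (\sum_(0 <= i < N.+1) c x i)).
  by rewrite big_nat_recr //= lerDl c_ge0.
rewrite big_mkord big_ord_recl lerD2l.
rewrite (eq_bigr (fun i : 'I_N => 2^-1 * h x i)); last first.
  by move=> i _; rewrite lift0 c2 h2 exprS invfM mulrA.
by rewrite -mulr_sumr ler_pM2l ?invr_gt0 //; apply: key.
Qed.

Lemma case2_iii : (forall x, cvgn (a x)) -> forall x, A (x *+ 2) = A x *+ 2.
Proof.
move=> Hc x; apply: cvg_lim => //.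
have -> : a (x *+ 2) = (fun n => a x n.+1 *+ 2).
  apply/funext => n; rewrite /a !s2 !invrK -sc2 scalerA -exprSr (inv2S' n) -scalerA.
  by rewrite scaler_nat scalerMnr.
have H : (fun n => a x n.+1) @ \oo --> A x.
  by have := cvg_shiftS (a x) (nbhs (A x)); rewrite /= => ->; exact: Hc.
exact: cvgMn H.
Qed.
End Case2.
End Main.

Lemma eqA_add (R : realType) (X : normedModType R) (Y : normedModType R) (B : X -> Y) :
  (forall x y, B (x + y) = B x + B y) ->
  forall x y : X,
      B (x + 3 *: y) *+ 3 - B (3 *: x + y)
      = (B (x + y) + B (x - y)) *+ 12 - (B x + B y) *+ 16
        + B (2 *: y) *+ 12 - B (2 *: x) *+ 4.
Proof.
move=> Badd x y.
have B0 : B 0 = 0.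
  by have := Badd 0 0; rewrite addr0 => /(congr1 (fun z => z - B 0)); rewrite subrr addrK.
have Bneg : forall v, B (- v) = - B v.
  move=> v; apply/eqP; rewrite -subr_eq0 opprK addrC -Badd subrr B0 //.
have BMn : forall v n, B (v *+ n) = B v *+ n.
  by move=> v; elim=> [|n IH]; rewrite ?mulr0n ?B0 // !mulrS Badd IH.
rewrite !scaler_nat !Badd Bneg.
zmod.
Qed.

Theorem theorem3p1 (R : realType) (X : normedModType R)
  (Y : completeNormedModType R) (l : int) (f : X -> Y) (phi : X -> X -> R) :
  (l = 1 \/ l = -1) ->
  odd_map f ->
  (forall x y, 0 <= phi x y) ->
  (forall x y, `|Df f x y| <= phi x y) ->
  (forall x : X,
     (\sum_(1 <= i <oo)
        ((2:R) ^ (i%:Z * l) *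
         phi (((2:R) ^ (i%:Z * l))^-1 *: x) (((2:R) ^ (i%:Z * l))^-1 *: x))%:E
      < +oo)%E) ->
  (forall x y : X,
     (fun n : nat => (2:R) ^ (l * n%:Z) *
        phi (((2:R) ^ (l * n%:Z))^-1 *: x) (((2:R) ^ (l * n%:Z))^-1 *: y))
       @ \oo --> (0:R)) ->
  let eqA (A : X -> Y) := forall x y : X,
      A (x + 3 *: y) *+ 3 - A (3 *: x + y)
      = (A (x + y) + A (x - y)) *+ 12 - (A x + A y) *+ 16
        + A (2 *: y) *+ 12 - A (2 *: x) *+ 4 in
  let boundA (A : X -> Y) := forall x : X,
      (`|f (2 *: x) - f x *+ 8 - A x|%:E
       <= (2^-1 : R)%:E *
          \sum_((if (l == 1)%R then 0%N else 1%N) <= i <oo)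
            ((2:R) ^ (i%:Z * l) *
             phi (((2:R) ^ (l * (i%:Z + l)))^-1 *: x)
                 (((2:R) ^ (l * (i%:Z + l)))^-1 *: x))%:E)%E in
  exists A : X -> Y,
    (forall x : X,
       (fun n : nat => (2:R) ^ (l * n%:Z) *:
          (f (((2:R) ^ (l * (n%:Z - l)))^-1 *: x)
           - f (((2:R) ^ (l * n%:Z))^-1 *: x) *+ 8))
         @ \oo --> A x) /\
    additive_map A /\ eqA A /\ boundA A /\
    (forall A' : X -> Y, additive_map A' -> eqA A' -> boundA A' -> A' = A).
Proof.
move=> Hl fodd phi0 HD Hsum Hlim eqA boundA.
have [k0 [k0E Hpack]] : exists k0 : nat, (if (l == 1)%R then 0%N else 1%N) = k0 /\
  exists A0 : X -> Y, (forall x, @a R X Y l f x @ \oo --> A0 x) /\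
    (forall x y, A0 (x + y) = A0 x + A0 y) /\
    (forall x, (`|@g R X Y f x - A0 x|%:E <= (2^-1)%:E * \sum_(k0 <= i <oo) (@c R X l phi x i)%:E)%E) /\
    (forall B : X -> Y, (forall x y, B (x + y) = B x + B y) ->
       (forall x, (`|@g R X Y f x - B x|%:E <= (2^-1)%:E * \sum_(k0 <= i <oo) (@c R X l phi x i)%:E)%E) ->
       B = A0).
  case: Hl => e.
    exists 0%N; split; first by rewrite e.
    apply: (@package R X Y l f phi fodd phi0 HD Hlim 0%N).
    - exact: case1_i fodd HD e.
    - exact: case1_ii phi0 Hsum e.
    - exact: case1_iii e.
  exists 1%N; split; first by rewrite e.
  apply: (@package R X Y l f phi fodd phi0 HD Hlim 1%N).
  - exact: case2_i fodd HD e.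
  - exact: case2_ii phi0 Hsum e.
  - exact: case2_iii e.
have [A0 [Hc [Hadd [Hb Hu]]]] := Hpack.
exists A0; split.
  move=> x; rewrite (_ : (fun n : nat => _) = @a R X Y l f x); first exact: Hc.
  by apply/funext => n; exact: seqE Hl x n.
split; first exact: Hadd.
split; first exact: eqA_add Hadd.
split; first by move=> x; rewrite /boundA k0E; exact: Hb x.
move=> A' Hadd' _ Hb'; apply: Hu => // x.
by have := Hb' x; rewrite k0E.
Qed.
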